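(* Let $\psi$ be the SC decoder and $\Psi$ the SSC decoder (with arbitrary, not necessarily ordered, index sets). Then $$\Pr\big(\psi(A\mathbf X,\mathbf Y)\neq\mathbf X\big)\le\frac{1}{2\log 2}\sum_{i\in\mathcal I_0}H(C_i\mid C_1^{i-1},\mathbf Y),$$ $$\Pr\big(\Psi(A\mathbf X,\mathbf Y)\neq\mathbf X\big)\le\frac{1}{\log 2}\sum_{i\in\mathcal I_0}H(C_i\mid C_1^{i-1},\mathbf Y),$$ where all logarithms (in $\log 2$ and in the entropies) are to base $|\mathcal X|$.
   Context: Setup: $\mathcal X,\mathcal Y$ finite, $|\mathcal X|\ge2$; $(\mathbf X,\mathbf Y)$ random on $\mathcal X^n\times\mathcal Y^n$; $A:\mathcal X^n\to\mathcal X^l$; $\{\mathcal I_0,\mathcal I_1\}$ a partition of $\{1,\dots,n\}$ with $|\mathcal I_1|=l$; $B:\mathcal X^n\to\mathcal X^{n-l}$ such that $T:\mathcal X^n\to\mathcal X^n$ is bijective, where $T(x)$ is the vector $c$ whose entries on $\mathcal I_1$ (increasing order) form $Ax$ and whose entries on $\mathcal I_0$ (increasing order) form $Bx$. Notation: $c_i^j=(c_i,\dots,c_j)$, $c_{\mathcal I_1}$ the subvector on $\mathcal I_1$. Extended codeword: $\mathbf C=(C_1,\dots,C_n)=T(\mathbf X)$. SC decoder: for $i\in\mathcal I_0$, $f_i(c_1^{i-1},y)\in\arg\max_{a}\mu_{C_i\mid C_1^{i-1}\mathbf Y}(a\mid c_1^{i-1},y)$ (ties/zero-probability conditions by a fixed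 rule). Given $(u,y)$, build $\hat c$ for $i=1,\dots,n$: $\hat c_{\mathcal I_1}=u$, and $\hat c_i=f_i(\hat c_1^{i-1},y)$ for $i\in\mathcal I_0$; $\psi(u,y)=T^{-1}(\hat c)$. SSC decoder: same recursion, except that for $i\in\mathcal I_0$, $\hat c_i$ is drawn at random according to $\mu_{C_i\mid C_1^{i-1}\mathbf Y}(\cdot\mid\hat c_1^{i-1},y)$ (fixed arbitrary distribution if the condition has probability zero); $\Psi(u,y)=T^{-1}(\hat c)$. *)

(* Defs.v *)
From Stdlib Require Import Reals.
From mathcomp Require Import all_boot.
Set Implicit Arguments.
Unset Strict Implicit.
Unset Printing Implicit Defensive.

Section Polar.
Variables (X Y : finType) (n : nat).
(* the joint law of (X, Y) on X^n x Y^n *)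
Variable mu : {ffun 'I_n -> X} -> {ffun 'I_n -> Y} -> R.
(* the bijection T : x |-> extended codeword *)
Variable T : {ffun 'I_n -> X} -> {ffun 'I_n -> X}.
(* the frozen index set I_1 (I_0 is its complement) *)
Variable I1 : {set 'I_n}.

Definition rsum (I : finType) (P : pred I) (F : I -> R) : R :=
  \big[Rplus/R0]_(i | P i) F i.
Definition rprod (I : finType) (P : pred I) (F : I -> R) : R :=
  \big[Rmult/R1]_(i | P i) F i.

(* c_1^{i-1} as a sequence (indices j < i, increasing) *)
Definition prefix (c : {ffun 'I_n -> X}) (i : 'I_n) : seq X :=
  [seq c j | j : 'I_n <- enum 'I_n & (nat_of_ord j < nat_of_ord i)%N].

(* P(C_1^{i-1} = s, Y = y) *)
Definition Pr_pref (i : 'I_n) (s : seq X) (y : {ffun 'I_n -> Y}) : R :=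
  rsum predT (fun x => if prefix (T x) i == s then mu x y else R0).

(* P(C_1^{i-1} = s, C_i = a, Y = y) *)
Definition Pr_pref_a (i : 'I_n) (s : seq X) (a : X) (y : {ffun 'I_n -> Y}) : R :=
  rsum predT (fun x => if (prefix (T x) i == s) && (T x i == a) then mu x y else R0).

(* mu_{C_i | C_1^{i-1} Y}(a | s, y) *)
Definition cond (i : 'I_n) (a : X) (s : seq X) (y : {ffun 'I_n -> Y}) : R :=
  Pr_pref_a i s a y / Pr_pref i s y.

Definition logX (z : R) : R := ln z / ln (INR #|X|).

(* H(C_i | C_1^{i-1}, Y) in base |X| *)
Definition Hcond (i : 'I_n) : R :=
  rsum predT (fun x => rsum predT (fun y =>
    Rmult (mu x y) (Ropp (logX (cond i (T x i) (prefix (T x) i) y))))).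

(* SC decoder: f i s y is the decision for position i given hat c_1^{i-1} = s.
   Output hat c as a sequence built for i = 1..n. *)
Definition sc_hat (l : nat) (f : 'I_n -> seq X -> {ffun 'I_n -> Y} -> X)
    (u : {ffun 'I_l -> X}) (y : {ffun 'I_n -> Y}) : seq X :=
  foldl (fun s i =>
    rcons s (if i \in I1 then nth (f i s y) (codom u) (index i (enum I1))
             else f i s y)) [::] (enum 'I_n).

Definition seq_to_vec (x0 : X) (s : seq X) : {ffun 'I_n -> X} :=
  [ffun j : 'I_n => nth x0 s (nat_of_ord j)].

Definition sc_dec (Tinv : {ffun 'I_n -> X} -> {ffun 'I_n -> X}) (x0 : X) (l : nat)
    (f : 'I_n -> seq X -> {ffun 'I_n -> Y} -> X)
    (u : {ffun 'I_l -> X}) (y : {ffun 'I_n -> Y}) : {ffun 'I_n -> X} :=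
  Tinv (seq_to_vec x0 (sc_hat f u y)).

(* SSC: law used to draw hat c_i, with fallback g when the condition has probability 0 *)
Definition ssc_step (g : 'I_n -> seq X -> {ffun 'I_n -> Y} -> X -> R)
    (i : 'I_n) (a : X) (s : seq X) (y : {ffun 'I_n -> Y}) : R :=
  if Req_EM_T (Pr_pref i s y) R0 then g i s y a else cond i a s y.

(* probability that the SSC decoder produces hat c = c on input (u, y)
   (chain rule of the sequential random draws) *)
Definition ssc_law (g : 'I_n -> seq X -> {ffun 'I_n -> Y} -> X -> R) (l : nat)
    (u : {ffun 'I_l -> X}) (y : {ffun 'I_n -> Y}) (c : {ffun 'I_n -> X}) : R :=
  (if [seq c i | i <- enum I1] == codom u then R1 else R0) *
  rprod (fun i => i \notin I1) (fun i => ssc_step g i (c i) (prefix c i) y).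

(* P(Psi(u, y) <> x) with Psi(u,y) = T^{-1}(hat c) *)
Definition ssc_err (Tinv : {ffun 'I_n -> X} -> {ffun 'I_n -> X})
    (g : 'I_n -> seq X -> {ffun 'I_n -> Y} -> X -> R) (l : nat)
    (u : {ffun 'I_l -> X}) (y : {ffun 'I_n -> Y}) (x : {ffun 'I_n -> X}) : R :=
  rsum predT (fun c => if Tinv c != x then ssc_law g u y c else R0).

End Polar.

(* Main.v *)
From HB Require Import structures.
Require Import Defs.
From Stdlib Require Import Reals Lra.
From mathcomp Require Import all_boot.
From Stdlib Require Import Classical.
Set Implicit Arguments.
Unset Strict Implicit.
Local Open Scope R_scope.

Lemma RplusA' : associative Rplus. Proof. by move=> x y z; ring. Qed.
Lemma RplusC' : commutative Rplus. Proof. by move=> x y; ring. Qed.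
Lemma Rplus0' : left_id R0 Rplus. Proof. by move=> x; ring. Qed.
HB.instance Definition _ := Monoid.isComLaw.Build R R0 Rplus RplusA' RplusC' Rplus0'.
Lemma RmultA' : associative Rmult. Proof. by move=> x y z; ring. Qed.
Lemma RmultC' : commutative Rmult. Proof. by move=> x y; ring. Qed.
Lemma Rmult1' : left_id R1 Rmult. Proof. by move=> x; ring. Qed.
HB.instance Definition _ := Monoid.isComLaw.Build R R1 Rmult RmultA' RmultC' Rmult1'.

Section RS.
Variable I : finType.
Implicit Types (P : pred I) (F G : I -> R).

Lemma rsum_le P F G : (forall i, P i -> F i <= G i) -> rsum P F <= rsum P G.
Proof. move=> h; rewrite /rsum; elim/big_rec2: _ => [|i a b Pi hab]; first lra.
by have := h i Pi; lra. Qed.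

Lemma rsum_ge0 P F : (forall i, P i -> 0 <= F i) -> 0 <= rsum P F.
Proof. move=> h; rewrite /rsum; elim/big_rec: _ => [|i a Pi ha]; first lra.
by have := h i Pi; lra. Qed.

Lemma rsum_scal c P F : c * rsum P F = rsum P (fun i => c * F i).
Proof. rewrite /rsum; elim/big_rec2: _ => [|i a b Pi <-]; ring. Qed.

Lemma rsum_add P F G : rsum P (fun i => F i + G i) = rsum P F + rsum P G.
Proof. by rewrite /rsum big_split. Qed.

Lemma rsum_opp P F : rsum P (fun i => - F i) = - rsum P F.
Proof. rewrite /rsum; elim/big_rec2: _ => [|i a b Pi ->]; ring. Qed.

Lemma rsum_sub P F G : rsum P (fun i => F i - G i) = rsum P F - rsum P G.
Proof. rewrite /Rminus rsum_add rsum_opp //. Qed.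

Lemma rsum_single P F i0 : P i0 -> (forall i, P i -> 0 <= F i) -> F i0 <= rsum P F.
Proof. move=> Pi0 h; rewrite /rsum (bigD1 i0) //=.
have : 0 <= \big[Rplus/R0]_(i | P i && (i != i0)) F i.
  elim/big_rec: _ => [|i a Pi' ha]; first lra. case/andP: Pi' => Pi _. by have := h i Pi; lra.
lra. Qed.

Lemma rsum_eq P F G : (forall i, P i -> F i = G i) -> rsum P F = rsum P G.
Proof. by move=> h; apply: eq_bigr. Qed.

Lemma rsum_ind1 (e : I) (v : R) : rsum predT (fun a => if e == a then v else 0) = v.
Proof. rewrite /rsum (bigD1 e) //= eqxx big1 ?Rplus_0_r // => a Ha.
case: eqP => Hea //; by move: Ha; rewrite Hea eqxx ?andbF. Qed.

Lemma rsum_if P F : rsum P F = rsum predT (fun i => if P i then F i else 0).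
Proof. by rewrite /rsum big_mkcond. Qed.

Lemma rsum0 P : rsum P (fun _ => 0) = 0.
Proof. by rewrite /rsum big1. Qed.
End RS.

Lemma rsum_exchange (I J : finType) (F : I -> J -> R) :
  rsum predT (fun i => rsum predT (fun j => F i j)) =
  rsum predT (fun j => rsum predT (fun i => F i j)).
Proof. by rewrite /rsum exchange_big. Qed.

Lemma rprod_bound (I : finType) (P : pred I) (a : I -> R) :
  (forall i, P i -> 0 <= a i <= 1) ->
  0 <= rprod P a <= 1 /\ 1 - rprod P a <= rsum P (fun i => 1 - a i).
Proof. move=> h; rewrite /rprod /rsum.
elim/big_rec2: _ => [|i s p Pi [hp hs]]; first lra.
have := h i Pi => hi. split; first nra. nra. Qed.

Lemma ln_le_sub1 x : 0 < x -> ln x <= x - 1.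
Proof. move=> hx; have := exp_ineq1_le (ln x); rewrite exp_ln //; lra. Qed.

Lemma ln_mono x y : 0 < x -> x <= y -> ln x <= ln y.
Proof. move=> hx [hxy|->]; last lra. by left; apply: ln_increasing. Qed.

Lemma ln2_pos : 0 < ln 2.
Proof. have := ln_lt_2; lra. Qed.

Lemma ln2_lt1 : ln 2 < 1.
Proof. have h := exp_ineq1 1 ltac:(lra).
rewrite -(ln_exp 1); apply: ln_increasing; lra. Qed.

Lemma NL m Z : 0 < Z ->
  ((m <= /2 /\ Z <= m) \/ (/2 <= m /\ m <= 1 /\ Z <= 1 - 2*(1-m) + 2*((1-m)*(1-m)))) ->
  2 * ln 2 * (1 - m) <= - ln Z.
Proof.
move=> hZ H; have l0 := ln2_pos; have l1 := ln2_lt1.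
case: H => [[hm hZm]|[hm1 [hm2 hZu]]].
- have hm0 : 0 < m by lra.
  have h1 := ln_mono hZ hZm.
  have h2 := (@ln_le_sub1 (2 * m) ltac:(lra)).
  rewrite ln_mult in h2; try lra.
  nra.
- set r := 1 - m in hZu *.
  set u := 1 - 2*r + 2*(r*r) in hZu.
  have hu : 0 < u by lra.
  have h1 := ln_mono hZ hZu.
  have hr0 : 0 <= r by rewrite /r; lra.
  have hr1 : r <= /2 by rewrite /r; lra.
  suff : ln u <= - (2 * ln 2 * r) by rewrite /r; lra.
  case: (Rle_lt_dec r (1 - ln 2)) => hr.
  + have h2 := ln_le_sub1 hu. rewrite /u in h2 *. nra.
  + have h2 := (@ln_le_sub1 (2 * u) ltac:(lra)).
    rewrite ln_mult in h2; try lra.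
    rewrite /u in h2 *. nra.
Qed.

Lemma Rdiv_le_1 a p : 0 < p -> a <= p -> a / p <= 1.
Proof. move=> hp ha; have : a * / p <= p * / p.
  by apply: Rmult_le_compat_r => //; apply: Rlt_le; apply: Rinv_0_lt_compat.
by rewrite Rinv_r //; lra. Qed.
Lemma Rdiv_le_0_compat a p : 0 <= a -> 0 < p -> 0 <= a / p.
Proof. move=> ha hp; apply: Rmult_le_pos => //; apply: Rlt_le; by apply: Rinv_0_lt_compat. Qed.

Section HR.
Variables (I X : finType) (mu : I -> R) (b : I -> bool) (c : I -> X) (f : X).
Hypothesis mu0 : forall x, 0 <= mu x.
Let P := rsum predT (fun x => if b x then mu x else 0).
Let Pa a := rsum predT (fun x => if b x && (c x == a) then mu x else 0).
Let q x := Pa (c x) / P.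
Hypothesis hmax : 0 < P -> forall a, Pa a / P <= Pa f / P.

Lemma Pa_ge0 a : 0 <= Pa a.
Proof. apply: rsum_ge0 => x _; case: ifP => _; [apply: mu0|lra]. Qed.

Lemma Pa_leP a : Pa a <= P.
Proof. apply: rsum_le => x _; case: (b x); case: (c x == a) => /=; have := mu0 x; lra. Qed.

Lemma Pa_two a : a != f -> Pa a + Pa f <= P.
Proof. move=> haf; rewrite /Pa /P -rsum_add; apply: rsum_le => x _.
case: (b x) => /=; last lra.
case: eqP => [->|_]; first by rewrite (negbTE haf); have := mu0 x; lra.
case: (c x == f); have := mu0 x; lra. Qed.

Lemma mu_lePa x : b x -> mu x <= Pa (c x).
Proof. move=> bx.
have := @rsum_single I predT (fun x' => if b x' && (c x' == c x) then mu x' else 0) x isT.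
rewrite bx eqxx /=; apply => x' _; case: ifP => _; [apply: mu0|lra]. Qed.

Lemma q_bounds x : b x -> 0 < mu x -> 0 < q x <= 1.
Proof. move=> bx hm; have h1 := mu_lePa bx; have h2 := Pa_leP (c x).
rewrite /q; split; first by apply: Rdiv_lt_0_compat; lra.
apply: Rdiv_le_1; lra. Qed.

Lemma E_ge0 : 0 <= rsum predT (fun x => if b x then mu x * (- ln (q x)) else 0).
Proof. apply: rsum_ge0 => x _; case: ifP => bx; last lra.
case: (mu0 x) => hm; last by rewrite -hm; lra.
have [hq0 hq1] := q_bounds bx hm.
have := ln_mono hq0 hq1; rewrite ln_1 => h; nra. Qed.

Lemma LHS_eq : rsum predT (fun x => if b x then (if f != c x then mu x else 0) else 0)
  = P - Pa f.
Proof. rewrite /P /Pa -rsum_sub; apply: rsum_eq => x _.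
case: (b x) => /=; last lra. rewrite eq_sym; case: (c x == f) => /=; lra. Qed.

Lemma HR : rsum predT (fun x => if b x then (if f != c x then mu x else 0) else 0)
  <= / (2 * ln 2) * rsum predT (fun x => if b x then mu x * (- ln (q x)) else 0).
Proof.
have l0 := ln2_pos.
have hK : 0 < / (2 * ln 2) by apply: Rinv_0_lt_compat; lra.
rewrite LHS_eq. have hE := E_ge0. have hPf := Pa_ge0 f.
have hP0 : 0 <= P by have := Pa_leP f; lra.
case: hP0 => hP; last by rewrite -hP; nra.
have hPa : forall a, Pa a <= Pa f.
  move=> a; have := hmax hP a => h.
  have := Rmult_le_compat_r P _ _ (Rlt_le _ _ hP) h.
  by rewrite /Rdiv !Rmult_assoc Rinv_l ?Rmult_1_r; lra.
set m := Pa f / P.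
have hm1 : m <= 1 by apply: Rdiv_le_1; [lra|apply: Pa_leP].
set Z := rsum predT (fun x => if b x then mu x / P * q x else 0).
have hZ : 0 < Z.
  case: (classic (exists x, b x /\ 0 < mu x)) => [[x [bx hx]]|hno].
    have [hq0 _] := q_bounds bx hx.
    apply: Rlt_le_trans (@rsum_single I predT _ x isT _); first by rewrite bx;
      apply: Rmult_lt_0_compat => //; apply: Rdiv_lt_0_compat.
    move=> x' _; case: ifP => bx'; last lra.
    case: (mu0 x') => hm'; last by rewrite -hm'; lra.
    have [hq0' _] := q_bounds bx' hm'.
    apply: Rlt_le; apply: Rmult_lt_0_compat => //; apply: Rdiv_lt_0_compat; lra.
  exfalso; suff : P <= 0 by lra.
  rewrite -(@rsum0 I predT) /P; apply: rsum_le => x _; case: ifP => bx; last lra.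
  case: (Rle_lt_dec (mu x) 0) => // hx; case: hno; by exists x.
(* Jensen *)
have hJ : P * (- ln Z) <= rsum predT (fun x => if b x then mu x * (- ln (q x)) else 0).
  have -> : P * (- ln Z) = P * (- ln Z + 1) - / Z * P * Z by field; lra.
  have -> : P * (- ln Z + 1) - / Z * P * Z =
     rsum predT (fun x => (if b x then mu x else 0) * (- ln Z + 1)
        - / Z * P * (if b x then mu x / P * q x else 0)).
    rewrite rsum_sub; congr (_ - _).
      rewrite Rmult_comm rsum_scal; apply: rsum_eq => x _; ring.
    by rewrite rsum_scal.
  apply: rsum_le => x _; case: ifP => bx; last lra.
  case: (mu0 x) => hm; last by rewrite -hm; field_simplify; lra.
  have [hq0 hq1] := q_bounds bx hm.
  have hl := @ln_le_sub1 (q x / Z) ltac:(apply: Rdiv_lt_0_compat; lra).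
  rewrite /Rdiv ln_mult ?ln_Rinv in hl; try apply: Rinv_0_lt_compat; try lra.
  have : mu x * (ln (q x) + - ln Z) <= mu x * (q x * / Z - 1) by apply: Rmult_le_compat_l; lra.
  move=> h2. have -> : / Z * P * (mu x / P * q x) = mu x * (q x * / Z) by field; lra.
  nra.
have hZb : (m <= /2 /\ Z <= m) \/ (/2 <= m /\ m <= 1 /\ Z <= 1 - 2*(1-m) + 2*((1-m)*(1-m))).
  case: (Rle_lt_dec m (/2)) => hm2; [left|right]; split => //; try lra.
    apply: Rle_trans (_ : rsum predT (fun x => m * (/P * (if b x then mu x else 0))) <= _).
      apply: rsum_le => x _; case: ifP => bx; last lra.
      have hq : q x <= m by rewrite /q /m /Rdiv; apply: Rmult_le_compat_r;
        [apply: Rlt_le; apply: Rinv_0_lt_compat|apply: hPa].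
      have := mu0 x => hmu.
      have : 0 <= mu x / P by apply: Rdiv_le_0_compat.
      nra.
    rewrite -rsum_scal -rsum_scal -/P Rinv_l; lra.
  split => //.
  apply: Rle_trans (_ : rsum predT (fun x => (1 - m) / P * (if b x then mu x else 0)
      + (2 * m - 1) / P * (if b x && (c x == f) then mu x else 0)) <= _).
    apply: rsum_le => x _; case: ifP => bx /=; last lra.
    have hmu := mu0 x. have hmp : 0 <= mu x / P by apply: Rdiv_le_0_compat.
    case: eqP => hcf.
      have -> : q x = m by rewrite /q hcf.
      have -> : mu x / P * m = (1 - m) / P * mu x + (2 * m - 1) / P * mu x by field; lra.
      lra.
    have hq : q x <= 1 - m.
      have := Pa_two (introN eqP hcf) => h2.
      have -> : 1 - m = (P - Pa f) / P by rewrite /m; field; lra.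
      rewrite /q /Rdiv; apply: Rmult_le_compat_r; last lra.
      by apply: Rlt_le; apply: Rinv_0_lt_compat.
    have -> : (1 - m) / P * mu x + (2 * m - 1) / P * 0 = mu x / P * (1 - m) by field; lra.
    nra.
  rewrite rsum_add -!rsum_scal -/P.
  have -> : rsum predT (fun x => if b x && (c x == f) then mu x else 0) = Pa f by [].
  have -> : Pa f = m * P by rewrite /m; field; lra.
  apply: Req_le; field; lra.
have hN := NL hZ hZb.
apply: Rle_trans (_ : / (2 * ln 2) * (P * (- ln Z)) <= _); last by apply: Rmult_le_compat_l; lra.
have -> : P - Pa f = P * (1 - m) by rewrite /m; field; lra.
have : P * (2 * ln 2 * (1 - m)) <= P * (- ln Z) by apply: Rmult_le_compat_l; lra.
move=> h. have hi : 0 < / (2 * ln 2) by apply: Rinv_0_lt_compat; lra.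
have -> : P * (1 - m) = / (2 * ln 2) * (P * (2 * ln 2 * (1 - m))) by field; lra.
apply: Rmult_le_compat_l; lra.
Qed.
End HR.
Lemma prefix_local (X : finType) n (c c' : {ffun 'I_n -> X}) (i : 'I_n) :
  (forall j : 'I_n, (j < i)%N -> c j = c' j) -> Defs.prefix c i = Defs.prefix c' i.
Proof. move=> h; rewrite /Defs.prefix; apply/eq_in_map => j; rewrite mem_filter.
by case/andP => hj _; apply: h. Qed.

Lemma filter_enum_take n k : (k <= n)%N ->
  [seq j <- enum 'I_n | (nat_of_ord j < k)%N] = take k (enum 'I_n).
Proof. move=> hk; apply: (inj_map val_inj).
rewrite map_take val_enum_ord take_iota (minn_idPl hk).
rewrite -(@filter_iota_ltn 0 n k hk) -val_enum_ord filter_map. done. Qed.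

Lemma sc_dec_ok (X Y : finType) n l (I1 : {set 'I_n}) (T Tinv : {ffun 'I_n -> X} -> {ffun 'I_n -> X})
  (hT1 : cancel T Tinv) (x0 : X) (f : 'I_n -> seq X -> {ffun 'I_n -> Y} -> X)
  (u : {ffun 'I_l -> X}) y x :
  codom u = [seq T x i | i <- enum I1] ->
  (forall i, i \notin I1 -> f i (Defs.prefix (T x) i) y = T x i) ->
  sc_dec I1 Tinv x0 f u y = x.
Proof.
move=> hu hf.
suff hs : forall k, (k <= n)%N -> foldl (fun s i =>
    rcons s (if i \in I1 then nth (f i s y) (codom u) (index i (enum I1))
             else f i s y)) [::] (take k (enum 'I_n)) = map (T x) (take k (enum 'I_n)).
  rewrite /sc_dec /sc_hat.
  have := hs n (leqnn n); rewrite take_oversize ?size_enum_ord // => ->.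
  have -> : seq_to_vec n x0 [seq T x i | i <- enum 'I_n] = T x.
    apply/ffunP => j; rewrite ffunE (nth_map j) ?size_enum_ord //.
    by rewrite nth_ord_enum.
  by rewrite hT1.
elim=> [|k IH] hk; first by rewrite take0.
have hk' : (k < n)%N by [].
have hsz : (k < size (enum 'I_n))%N by rewrite size_enum_ord.
rewrite (take_nth (Ordinal hk') hsz) foldl_rcons IH ?(ltnW hk) // map_rcons.
set i := nth (Ordinal hk') (enum 'I_n) k.
have hi : i = Ordinal hk' by rewrite /i (nth_ord_enum (Ordinal hk') (Ordinal hk')).
congr rcons; case: ifP => hI.
  rewrite hu (nth_map i); last by rewrite index_mem mem_enum.
  by rewrite nth_index // mem_enum.
have -> : map (T x) (take k (enum 'I_n)) = Defs.prefix (T x) i.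
  by rewrite /Defs.prefix hi /= filter_enum_take // ltnW.
by apply: hf; rewrite hI.
Qed.
Section Chain.
Variables (X : finType) (n : nat) (x0 : X) (w : 'I_n -> {ffun 'I_n -> X} -> R).
Definition upd (c : {ffun 'I_n -> X}) (i : 'I_n) (a : X) : {ffun 'I_n -> X} :=
  [ffun j => if j == i then a else c j].
Hypothesis wloc : forall (i : 'I_n) (c c' : {ffun 'I_n -> X}), (forall j : 'I_n, (j <= i)%N -> c j = c' j) -> w i c = w i c'.
Hypothesis wsum : forall (i : 'I_n) (c : {ffun 'I_n -> X}), rsum predT (fun a => w i (upd c i a)) = 1.

Definition agree m (c c' : {ffun 'I_n -> X}) := [forall j : 'I_n, (j < m)%N ==> (c' j == c j)].
Definition Sm m c := rsum (agree m c) (fun c' => rprod (fun i : 'I_n => (m <= i)%N) (fun i => w i c')).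

Lemma Sm_one k : forall m, (m + k = n)%N -> forall c, Sm m c = 1.
Proof.
elim: k => [|k IH] m hmk c.
  rewrite addn0 in hmk; subst m.
  rewrite /Sm /rsum (eq_bigl (pred1 c)); last first.
    move=> c'; rewrite /agree /=; apply/forallP/eqP => [h|->]; last by move=> j; apply/implyP.
    by apply/ffunP => j; have := h j; rewrite ltn_ord /= => /eqP.
  rewrite big_pred1_eq /rprod big_pred0 // => i; by rewrite leqNgt ltn_ord.
have hm : (m < n)%N by rewrite -hmk addnS ltnS leq_addr.
set im := Ordinal hm.
have hstep : forall c', rprod (fun i : 'I_n => (m <= i)%N) (fun i => w i c') =
    w im c' * rprod (fun i : 'I_n => (m.+1 <= i)%N) (fun i => w i c').
  move=> c'; rewrite /rprod (bigD1 im) //=; congr (_ * _).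
  apply: eq_bigl => i; rewrite ltn_neqAle andbC; congr (_ && _).
  rewrite [m == i]eq_sym; congr negb; apply/eqP/eqP => [->|h] //; by apply: val_inj.
rewrite /Sm (@rsum_eq _ _ _ (fun c' => w im c' * rprod (fun i : 'I_n => (m.+1 <= i)%N) (fun i => w i c'))); last by move=> c' _; apply: hstep.
rewrite /rsum (partition_big (fun c' : {ffun 'I_n -> X} => c' im) predT) //.
rewrite -(wsum im c); apply: eq_bigr => a _.
have -> : \big[Rplus/R0]_(i | agree m c i && (i im == a)) (w im i * rprod (fun i0 : 'I_n => (m.+1 <= i0)%N) (fun i0 => w i0 i))
   = \big[Rplus/R0]_(i | agree m.+1 (upd c im a) i) (w im (upd c im a) * rprod (fun i0 : 'I_n => (m.+1 <= i0)%N) (fun i0 => w i0 i)).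
  apply: eq_big => c'.
    apply/andP/forallP => [[/forallP h /eqP ha] j|h].
      apply/implyP => hj; rewrite ffunE; case: (eqVneq j im) => [->|/eqP hne]; first by apply/eqP.
      apply: (implyP (h j)).
      by rewrite ltn_neqAle -ltnS hj andbT; apply/eqP => hjm; apply: hne; apply: val_inj.
    split.
      apply/forallP => j; apply/implyP => hj; have := implyP (h j) (ltnW hj).
      rewrite ffunE; case: (eqVneq j im) => [hji|_ //]; by rewrite hji ltnn in hj.
    by have := implyP (h im) (ltnSn m); rewrite ffunE eqxx.
  case/andP => /forallP h /eqP ha; congr (_ * _); apply: wloc => j hj.
  rewrite ffunE; case: (eqVneq j im) => [->|/eqP hne]; first by rewrite ha.
  apply/eqP; apply: (implyP (h j)).
  by rewrite ltn_neqAle hj andbT; apply/eqP => hjm; apply: hne; apply: val_inj.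
rewrite -[RHS]Rmult_1_r -(IH m.+1 _ (upd c im a)); last by rewrite addSnnS.
by rewrite /Sm rsum_scal.
Qed.

Lemma chain_sum : rsum predT (fun c => rprod predT (fun i => w i c)) = 1.
Proof.
rewrite -(@Sm_one n 0 (add0n n) [ffun _ => x0]) /Sm /rsum.
apply: eq_big => c.
  by apply/esym/forallP.
move=> _; apply: eq_bigl => i; by [].
Qed.
End Chain.

Lemma rsum_group (I : finType) (Z : eqType) (p : I -> Z) (F G : I -> R) :
  (forall s, rsum predT (fun x => if p x == s then F x else 0) <=
             rsum predT (fun x => if p x == s then G x else 0)) ->
  rsum predT F <= rsum predT G.
Proof.
move=> h; set S := undup (map p (enum I)).
have eqS : forall H : I -> R, rsum predT H =
    \big[Rplus/R0]_(s <- S) rsum predT (fun x => if p x == s then H x else 0).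
  move=> H; rewrite /rsum; symmetry; rewrite exchange_big /=.
  apply: eq_bigr => x _.
  rewrite (bigD1_seq (p x)) ?undup_uniq ?mem_undup ?map_f ?mem_enum //= ?eqxx.
  rewrite big1 ?Rplus_0_r //. move=> s hs. by rewrite eq_sym (negbTE hs).
  by rewrite ?mem_enum ?mem_index_enum.
rewrite !eqS; elim/big_rec2: _ => [|s a b _ hab]; first lra.
by have := h s; lra.
Qed.

Lemma rsum_exchP (I J : finType) (P : pred I) (F : I -> J -> R) :
  rsum P (fun i => rsum predT (fun j => F i j)) =
  rsum predT (fun j => rsum P (fun i => F i j)).
Proof. by rewrite /rsum exchange_big. Qed.

Section Main.
Variables (X Y : finType) (n : nat) (mu : {ffun 'I_n -> X} -> {ffun 'I_n -> Y} -> R)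
  (T : {ffun 'I_n -> X} -> {ffun 'I_n -> X}).
Hypothesis mu_ge0 : forall x y, 0 <= mu x y.

Lemma Pr_pref_ge0 i s y : 0 <= Pr_pref mu T i s y.
Proof. apply: rsum_ge0 => x _; case: ifP => _; [apply: mu_ge0|lra]. Qed.

Lemma Pr_pref_a_ge0 i s a y : 0 <= Pr_pref_a mu T i s a y.
Proof. apply: rsum_ge0 => x _; case: ifP => _; [apply: mu_ge0|lra]. Qed.

Lemma Pr_pref_a_le i s a y : Pr_pref_a mu T i s a y <= Pr_pref mu T i s y.
Proof. apply: rsum_le => x _; case: (_ == s); case: (_ == a) => /=; have := mu_ge0 x y; lra. Qed.

Lemma Pa_sum i s y : rsum predT (fun a => Pr_pref_a mu T i s a y) = Pr_pref mu T i s y.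
Proof. rewrite /Pr_pref_a rsum_exchange; apply: rsum_eq => x _.
case: (_ == s) => /=; last by rewrite rsum0. by rewrite rsum_ind1. Qed.

Lemma mu_le_Pa x y i : mu x y <= Pr_pref_a mu T i (Defs.prefix (T x) i) (T x i) y.
Proof.
have := @rsum_single _ predT (fun x' => if (Defs.prefix (T x') i == Defs.prefix (T x) i) && (T x' i == T x i)
   then mu x' y else 0) x isT.
rewrite !eqxx /=; apply => x' _; case: ifP => _; [apply: mu_ge0|lra]. Qed.

Lemma cond_bounds x y i : 0 < mu x y ->
  0 < cond mu T i (T x i) (Defs.prefix (T x) i) y <= 1.
Proof. move=> hm; have h1 := mu_le_Pa x y i.
have h2 := Pr_pref_a_le i (Defs.prefix (T x) i) (T x i) y.
rewrite /cond; split; first by apply: Rdiv_lt_0_compat; lra.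
apply: Rdiv_le_1; lra. Qed.

Variables (g : 'I_n -> seq X -> {ffun 'I_n -> Y} -> X -> R).
Hypothesis g_ge0 : forall i s y a, 0 <= g i s y a.
Hypothesis g_sum1 : forall i s y, rsum predT (fun a => g i s y a) = 1.

Lemma step_sum i s y : rsum predT (fun a => ssc_step mu T g i a s y) = 1.
Proof. rewrite /ssc_step; case: Req_EM_T => hP; first exact: g_sum1.
rewrite (@rsum_eq _ _ _ (fun a => / Pr_pref mu T i s y * Pr_pref_a mu T i s a y)).
  by rewrite -rsum_scal Pa_sum; field.
by move=> a _; rewrite /cond /Rdiv Rmult_comm.
Qed.

Lemma step_bounds i a s y : 0 <= ssc_step mu T g i a s y <= 1.
Proof. rewrite /ssc_step; case: Req_EM_T => hP.
  split; first exact: g_ge0. rewrite -(g_sum1 i s y).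
  apply: (@rsum_single _ predT (fun a => g i s y a) a isT) => a' _; exact: g_ge0.
have hP0 : 0 < Pr_pref mu T i s y by have := Pr_pref_ge0 i s y; lra.
have h1 := Pr_pref_a_ge0 i s a y. have h2 := Pr_pref_a_le i s a y.
rewrite /cond; split; first exact: Rdiv_le_0_compat.
exact: Rdiv_le_1.
Qed.
End Main.

Section SSC.
Variables (X Y : finType) (n l : nat) (mu : {ffun 'I_n -> X} -> {ffun 'I_n -> Y} -> R)
  (T Tinv : {ffun 'I_n -> X} -> {ffun 'I_n -> X}) (I1 : {set 'I_n})
  (A : {ffun 'I_n -> X} -> {ffun 'I_l -> X}).
Hypothesis mu_ge0 : forall x y, 0 <= mu x y.
Hypothesis hTA : forall x, [seq T x i | i <- enum I1] = codom (A x).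
Hypotheses (hT1 : cancel T Tinv) (hT2 : cancel Tinv T).
Variables (x0 : X) (g : 'I_n -> seq X -> {ffun 'I_n -> Y} -> X -> R).
Hypothesis g_ge0 : forall i s y a, 0 <= g i s y a.
Hypothesis g_sum1 : forall i s y, rsum predT (fun a => g i s y a) = 1.

Lemma ssc_err_eq x y : ssc_err mu T I1 Tinv g (A x) y x =
  1 - rprod (fun i => i \notin I1) (fun i => ssc_step mu T g i (T x i) (Defs.prefix (T x) i) y).
Proof.
set w := fun (i : 'I_n) (c : {ffun 'I_n -> X}) => if i \in I1 then (if c i == T x i then 1 else 0)
   else ssc_step mu T g i (c i) (Defs.prefix c i) y.
have hlaw : forall c, ssc_law mu T I1 g (A x) y c = rprod predT (fun i => w i c).
  move=> c; rewrite /ssc_law /rprod [RHS](bigID (fun i => i \in I1)) /=.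
  congr (_ * _); last by apply: eq_bigr => i /negbTE; rewrite /w => ->.
  rewrite -hTA (eq_bigr (fun i => if c i == T x i then 1 else 0)); last first.
    by move=> i; rewrite /w => ->.
  case: (boolP [forall i in I1, c i == T x i]) => H.
    have -> : [seq c i | i <- enum I1] == [seq T x i | i <- enum I1].
      apply/eqP/eq_in_map => i; rewrite mem_enum => hi; apply/eqP; exact: (forall_inP H i hi).
    rewrite big1 // => i hi; rewrite (eqP (forall_inP H i hi)) eqxx; reflexivity.
  case/forall_inPn: H => i hi hne.
  have -> : ([seq c i | i <- enum I1] == [seq T x i | i <- enum I1]) = false.
    apply/negbTE/negP => /eqP /eq_in_map h; have := h i; rewrite mem_enum => /(_ hi) hc.
    by rewrite hc eqxx in hne.
  rewrite (bigD1 i) //= (negbTE hne); ring.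
have hsum : rsum predT (fun c => ssc_law mu T I1 g (A x) y c) = 1.
  rewrite (@rsum_eq _ predT _ (fun c => rprod predT (fun i => w i c))); last by move=> c _; apply: hlaw.
  apply: (chain_sum x0).
    move=> i c c' h; rewrite /w; have hi := h i (leqnn i); rewrite hi.
    case: (i \in I1) => //; congr ssc_step; apply: prefix_local => j hj.
    by apply: h; apply: ltnW.
  move=> i c; rewrite /w; case hI: (i \in I1).
    apply: (eq_trans _ (rsum_ind1 (T x i) 1)); apply: rsum_eq => a _.
    by rewrite /upd ffunE eqxx /= eq_sym.
  rewrite -(step_sum mu T g_sum1 i (Defs.prefix c i) y); apply: rsum_eq => a _.
  rewrite /upd ffunE eqxx; congr ssc_step; apply: prefix_local => j hj.
  by rewrite ffunE; case: eqP => // hji; rewrite hji ltnn in hj.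
have hlT : ssc_law mu T I1 g (A x) y (T x) =
    rprod (fun i => i \notin I1) (fun i => ssc_step mu T g i (T x i) (Defs.prefix (T x) i) y).
  by rewrite /ssc_law hTA eqxx Rmult_1_l.
rewrite -hsum -hlT /ssc_err.
have -> : rsum predT (fun c => ssc_law mu T I1 g (A x) y c) = ssc_law mu T I1 g (A x) y (T x) +
    rsum predT (fun c => if Tinv c != x then ssc_law mu T I1 g (A x) y c else R0).
  rewrite /rsum (bigD1 (T x)) //=; congr (_ + _); rewrite big_mkcond; apply: eq_bigr => c _ /=.
  have -> : (Tinv c != x) = (c != T x).
    congr negb; apply/eqP/eqP => [<-|->]; [by rewrite hT2|by rewrite hT1].
  by [].
ring.
Qed.
End SSC.

Lemma rsum_exch3 (I J K : finType) (P : pred K) (F : I -> J -> K -> R) :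
  rsum predT (fun i => rsum predT (fun j => rsum P (fun k => F i j k))) =
  rsum P (fun k => rsum predT (fun i => rsum predT (fun j => F i j k))).
Proof.
rewrite /rsum. under eq_bigr => i _ do rewrite exchange_big. by rewrite exchange_big.
Qed.

Unset Implicit Arguments.
Set Strict Implicit.

Theorem lemma4 (X Y : finType) (n l : nat)
  (hX : (2 <= #|X|)%N)
  (mu : {ffun 'I_n -> X} -> {ffun 'I_n -> Y} -> R)
  (mu_ge0 : forall x y, (0 <= mu x y))
  (mu_sum1 : rsum predT (fun x => rsum predT (fun y => mu x y)) = 1)
  (I1 : {set 'I_n}) (hI1 : #|I1| = l)
  (A : {ffun 'I_n -> X} -> {ffun 'I_l -> X})
  (B : {ffun 'I_n -> X} -> {ffun 'I_(n - l) -> X})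
  (T Tinv : {ffun 'I_n -> X} -> {ffun 'I_n -> X})
  (hTA : forall x, [seq T x i | i <- enum I1] = codom (A x))
  (hTB : forall x, [seq T x i | i <- enum (~: I1)] = codom (B x))
  (hT1 : cancel T Tinv) (hT2 : cancel Tinv T)
  (x0 : X)
  (f : 'I_n -> seq X -> {ffun 'I_n -> Y} -> X)
  (hf : forall i, i \notin I1 -> forall s y a,
          (cond mu T i a s y <= cond mu T i (f i s y) s y))
  (g : 'I_n -> seq X -> {ffun 'I_n -> Y} -> X -> R)
  (g_ge0 : forall i s y a, (0 <= g i s y a))
  (g_sum1 : forall i s y, rsum predT (fun a => g i s y a) = 1) :
  (rsum predT (fun x => rsum predT (fun y =>
       if sc_dec I1 Tinv x0 f (A x) y != x then mu x y else 0))
     <= 1 / (2 * logX X 2) * rsum (fun i => i \notin I1) (Hcond mu T))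
  /\
  (rsum predT (fun x => rsum predT (fun y =>
       mu x y * ssc_err mu T I1 Tinv g (A x) y x))
     <= 1 / logX X 2 * rsum (fun i => i \notin I1) (Hcond mu T)).
Proof.
have hX2 : 2 <= INR #|X|.
  by have := le_INR 2 #|X| (elimT leP hX); rewrite (_ : INR 2 = 2) //; simpl; ring.
have hL : 0 < ln (INR #|X|).
  rewrite -ln_1; apply: ln_increasing; lra.
set L := ln (INR #|X|) in hL.
have l0 := ln2_pos. have l1 := ln2_lt1.
split.
- set K := 1 / (2 * logX X 2).
  have hK : K = L / (2 * ln 2) by rewrite /K /logX -/L; field; lra.
  apply: Rle_trans (_ : rsum predT (fun x => rsum predT (fun y => rsum (fun i => i \notin I1)
      (fun i => if f i (Defs.prefix (T x) i) y != T x i then mu x y else 0))) <= _).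
    apply: rsum_le => x _; apply: rsum_le => y _.
    case: (boolP [forall i, (i \notin I1) ==> (f i (Defs.prefix (T x) i) y == T x i)]) => H.
      rewrite (sc_dec_ok hT1 x0 (esym (hTA x))); last first.
        by move=> i hi; apply/eqP; exact: (implyP (forallP H i) hi).
      rewrite eqxx; apply: rsum_ge0 => i _; case: ifP => _; [apply: mu_ge0|lra].
    move/forallPn: H => [i]; rewrite negb_imply => /andP[hi hne].
    apply: Rle_trans (_ : mu x y <= _); first by case: ifP => _; have := mu_ge0 x y; lra.
    have := @rsum_single _ (fun i => i \notin I1)
      (fun i => if f i (Defs.prefix (T x) i) y != T x i then mu x y else 0) i hi.
    rewrite hne; apply => j _; case: ifP => _; [apply: mu_ge0|lra].
  rewrite rsum_exch3 /K rsum_scal -/K; apply: rsum_le => i hi.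
  have -> : K * Hcond mu T i = rsum predT (fun x => rsum predT (fun y =>
      K * (mu x y * - logX X (cond mu T i (T x i) (Defs.prefix (T x) i) y)))).
    by rewrite /Hcond rsum_scal; apply: rsum_eq => x _; rewrite rsum_scal.
  rewrite rsum_exchange [X in _ <= X]rsum_exchange; apply: rsum_le => y _.
  apply: (rsum_group (p := fun x => Defs.prefix (T x) i)) => s.
  have H := @HR _ _ (fun x => mu x y) (fun x => Defs.prefix (T x) i == s) (fun x => T x i)
     (f i s y) (fun x => mu_ge0 x y) (fun _ a => hf i hi s y a).
  apply: Rle_trans (Rle_trans _ _ _ H _).
    apply: Req_le; apply: rsum_eq => x _; by case: eqP => [->|].
  apply: Req_le; rewrite rsum_scal; apply: rsum_eq => x _.
  case: eqP => [->|_]; last by ring.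
  transitivity (/ (2 * ln 2) * (mu x y * - ln (cond mu T i (T x i) s y))); first by [].
  rewrite hK /logX -/L; field; lra.
- set K := 1 / logX X 2.
  have hK : K = L / ln 2 by rewrite /K /logX -/L; field; lra.
  apply: Rle_trans (_ : rsum predT (fun x => rsum predT (fun y => rsum (fun i => i \notin I1)
      (fun i => mu x y * (1 - ssc_step mu T g i (T x i) (Defs.prefix (T x) i) y)))) <= _).
    apply: rsum_le => x _; apply: rsum_le => y _.
    rewrite (ssc_err_eq mu hTA hT1 hT2 x0 g_sum1) -rsum_scal.
    have [_ hb] := @rprod_bound _ (fun i => i \notin I1)
      (fun i => ssc_step mu T g i (T x i) (Defs.prefix (T x) i) y)
      (fun i _ => step_bounds T mu_ge0 g_ge0 g_sum1 i _ _ y).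
    by apply: Rmult_le_compat_l => //.
  rewrite rsum_exch3 /K rsum_scal -/K; apply: rsum_le => i hi.
  rewrite /Hcond rsum_scal; apply: rsum_le => x _; rewrite rsum_scal; apply: rsum_le => y _.
  destruct (mu_ge0 x y) as [hm|hm]; last by rewrite -hm; lra.
  have hc := cond_bounds T mu_ge0 i hm.
  have hP : Pr_pref mu T i (Defs.prefix (T x) i) y <> 0.
    have := mu_le_Pa T mu_ge0 x y i; have := Pr_pref_a_le T mu_ge0 i (Defs.prefix (T x) i) (T x i) y.
    lra.
  rewrite /ssc_step; destruct (Req_EM_T (Pr_pref mu T i (Defs.prefix (T x) i) y) R0) as [e|ne]; first by case: hP.
  set q := cond mu T i (T x i) (Defs.prefix (T x) i) y in hc *.
  have hq := @ln_le_sub1 q ltac:(lra).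
  have -> : K * (mu x y * - logX X q) = / ln 2 * (mu x y * - ln q) by rewrite hK /logX -/L; field; lra.
  have h0 : (1 - q) * ln 2 <= - ln q by nra.
  have h1 : mu x y * (1 - q) * ln 2 <= mu x y * - ln q.
    rewrite Rmult_assoc; apply: Rmult_le_compat_l; lra.
  have -> : mu x y * (1 - q) = / ln 2 * (mu x y * (1 - q) * ln 2) by field; lra.
  apply: Rmult_le_compat_l => //; apply: Rlt_le; apply: Rinv_0_lt_compat; lra.
Qed.
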